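(* Let $\gamma,\delta>0$, let $x=(x_{ij}),y=(y_{ij})\in MS(2,\mathbb{R})$ (so $x_{21}=x_{12}$, $y_{21}=y_{12}$) with $y$ positive definite, $D:=y_{11}y_{22}-y_{12}^2$, and $p=(p_1,p_2)$, $q=(q_1,q_2)\in\mathbb{R}^2$. Let $F=(f_{ij})_{i,j=1}^5$ be the real symmetric matrix ($f_{ji}=f_{ij}$) with $f_{11}=\frac{\gamma}{D}y_{22}+\delta p_1^2$, $f_{12}=-\frac{\gamma}{D}y_{12}+\delta p_1p_2$, $f_{13}=\frac{\gamma}{D}(y_{22}x_{11}-y_{12}x_{12})-\delta q_1p_1$, $f_{14}=\frac{\gamma}{D}(y_{22}x_{12}-y_{12}x_{22})-\delta q_1p_2$, $f_{15}=-\delta p_1$, $f_{22}=\frac{\gamma}{D}y_{11}+\delta p_2^2$, $f_{23}=\frac{\gamma}{D}(-y_{12}x_{11}+y_{11}x_{12})-\delta q_2p_1$, $f_{24}=\frac{\gamma}{D}(-y_{12}x_{12}+y_{11}x_{22})-\delta q_2p_2$, $f_{25}=-\delta p_2$, $f_{33}=\frac{\gamma}{D}[(x_{11}^2+y_{11}^2)y_{22}+(x_{12}^2-y_{12}^2)y_{11}-2x_{11}x_{12}y_{12}]+\delta q_1^2$, $f_{34}=\frac{\gamma}{D}[(-x_{12}^2-x_{11}x_{22}+y_{11}y_{22}-y_{12}^2)y_{12}+x_{11}x_{12}y_{22}+x_{12}x_{22}y_{11}]+\delta q_1q_2$, $f_{35}=\delta q_1$, $f_{44}=\frac{\gamma}{D}[(x_{12}^2-y_{12}^2)y_{22}+(x_{22}^2+y_{22}^2)y_{11}-2x_{12}x_{22}y_{12}]+\delta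 q_2^2$, $f_{45}=\delta q_2$, $f_{55}=\delta$. Put $I_2:=p_2q_1-p_1q_2$, $A:=2[(x_{11}-x_{22})y_{12}-x_{12}(y_{11}-y_{22})]$ and $B:=4x_{12}^2+(x_{11}-x_{22})^2+y_{11}^2+y_{22}^2+2y_{12}^2$. Then $$ \det F=\delta\Big[\gamma^4-\gamma^3\frac{\delta I_2}{D}A-\gamma^2\frac{(\delta I_2)^2}{D}B-\gamma\frac{(\delta I_2)^3}{D}A+(\delta I_2)^4\Big]. $$
   Context: $MS(2,\mathbb{R})$ denotes real symmetric $2\times 2$ matrices. The matrix $F$ is the paper's $5\times 5$ matrix $g'_{\tilde{\mathcal{X}}^J_2}(x,y,q,p,\kappa)$ associated with the $(q,p,\kappa)$ coordinates of the extended Siegel–Jacobi upper half space of degree $2$; here it is defined directly by the listed entries. *)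

(* Defs.v *)
From HB Require Import structures.
From mathcomp Require Import all_boot all_order all_algebra.
Set Implicit Arguments. Unset Strict Implicit. Unset Printing Implicit Defensive.
Import Order.TTheory GRing.Theory Num.Theory.
Local Open Scope ring_scope.

Section FDef.
Variable R : realFieldType.
Variables (gamma delta x11 x12 x22 y11 y12 y22 p1 p2 q1 q2 : R).

Definition Ddet : R := y11 * y22 - y12 ^+ 2.

Definition fentry (i j : nat) : R :=
  let g := gamma / Ddet in
  match i, j with
  | 1, 1 => g * y22 + delta * p1 ^+ 2
  | 1, 2 => - g * y12 + delta * p1 * p2
  | 1, 3 => g * (y22 * x11 - y12 * x12) - delta * q1 * p1
  | 1, 4 => g * (y22 * x12 - y12 * x22) - delta * q1 * p2
  | 1, 5 => - delta * p1
  | 2, 2 => g * y11 + delta * p2 ^+ 2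
  | 2, 3 => g * (- y12 * x11 + y11 * x12) - delta * q2 * p1
  | 2, 4 => g * (- y12 * x12 + y11 * x22) - delta * q2 * p2
  | 2, 5 => - delta * p2
  | 3, 3 => g * ((x11 ^+ 2 + y11 ^+ 2) * y22 + (x12 ^+ 2 - y12 ^+ 2) * y11
                  - 2 * x11 * x12 * y12) + delta * q1 ^+ 2
  | 3, 4 => g * ((- x12 ^+ 2 - x11 * x22 + y11 * y22 - y12 ^+ 2) * y12
                  + x11 * x12 * y22 + x12 * x22 * y11) + delta * q1 * q2
  | 3, 5 => delta * q1
  | 4, 4 => g * ((x12 ^+ 2 - y12 ^+ 2) * y22 + (x22 ^+ 2 + y22 ^+ 2) * y11
                  - 2 * x12 * x22 * y12) + delta * q2 ^+ 2
  | 4, 5 => delta * q2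
  | 5, 5 => delta
  | _, _ => 0
  end.

Definition Fmat : 'M[R]_5 :=
  \matrix_(i < 5, j < 5)
    if (i <= j)%N then fentry i.+1 j.+1 else fentry j.+1 i.+1.

End FDef.

(* Main.v *)
Require Import Defs.
From HB Require Import structures.
From mathcomp Require Import all_boot all_order all_algebra.
From mathcomp Require Import ring.
Import Order.TTheory GRing.Theory Num.Theory.
Local Open Scope ring_scope.

Lemma dexp (R : comRingType) n (A : 'M[R]_n.+1) :
  \det A = \sum_(j < n.+1) A 0 j * ((-1) ^+ j * \det (\matrix_(i < n, k < n) A (lift 0 i) (lift j k))).
Proof.
rewrite (expand_det_row _ 0); apply: eq_bigr => j _; rewrite /cofactor.
congr (_ * (_ * _)).
by congr (\det _); apply/matrixP => i k; rewrite !mxE.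
Qed.

Definition minorf {R : Type} (h : nat -> nat -> R) (j : nat) := fun a b : nat => h (bump 0 a) (bump j b).

Lemma dexp3 (R : comRingType) n (h : nat -> nat -> R) :
  \det (\matrix_(i < n.+1, j < n.+1) h i j) = \sum_(j < n.+1) h 0%N j * ((-1) ^+ j *
     \det (\matrix_(i < n, k < n) minorf h j i k)).
Proof.
rewrite dexp; apply: eq_bigr => j _; rewrite mxE; congr (_ * (_ * \det _)).
by apply/matrixP => i k; rewrite !mxE.
Qed.

Lemma detn1 (R : comRingType) (h : nat -> nat -> R) :
  \det (\matrix_(i < 1, j < 1) h i j) = h 0%N 0%N.
Proof. by rewrite det_mx11 mxE. Qed.

Lemma detn2 (R : comRingType) (h : nat -> nat -> R) :
  \det (\matrix_(i < 2, j < 2) h i j) =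
    0 + h 0 0 * h 1 1
    - h 0 1 * h 1 0.
Proof.
rewrite dexp3 !big_ord_recl big_ord0 !detn1 /minorf /=.
ring.
Qed.

Lemma detn3 (R : comRingType) (h : nat -> nat -> R) :
  \det (\matrix_(i < 3, j < 3) h i j) =
    0 + h 0 0 * h 1 1 * h 2 2
    - h 0 0 * h 1 2 * h 2 1
    - h 0 1 * h 1 0 * h 2 2
    + h 0 1 * h 1 2 * h 2 0
    + h 0 2 * h 1 0 * h 2 1
    - h 0 2 * h 1 1 * h 2 0.
Proof.
rewrite dexp3 !big_ord_recl big_ord0 !detn2 /minorf /=.
ring.
Qed.

Lemma detn4 (R : comRingType) (h : nat -> nat -> R) :
  \det (\matrix_(i < 4, j < 4) h i j) =
    0 + h 0 0 * h 1 1 * h 2 2 * h 3 3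
    - h 0 0 * h 1 1 * h 2 3 * h 3 2
    - h 0 0 * h 1 2 * h 2 1 * h 3 3
    + h 0 0 * h 1 2 * h 2 3 * h 3 1
    + h 0 0 * h 1 3 * h 2 1 * h 3 2
    - h 0 0 * h 1 3 * h 2 2 * h 3 1
    - h 0 1 * h 1 0 * h 2 2 * h 3 3
    + h 0 1 * h 1 0 * h 2 3 * h 3 2
    + h 0 1 * h 1 2 * h 2 0 * h 3 3
    - h 0 1 * h 1 2 * h 2 3 * h 3 0
    - h 0 1 * h 1 3 * h 2 0 * h 3 2
    + h 0 1 * h 1 3 * h 2 2 * h 3 0
    + h 0 2 * h 1 0 * h 2 1 * h 3 3
    - h 0 2 * h 1 0 * h 2 3 * h 3 1
    - h 0 2 * h 1 1 * h 2 0 * h 3 3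
    + h 0 2 * h 1 1 * h 2 3 * h 3 0
    + h 0 2 * h 1 3 * h 2 0 * h 3 1
    - h 0 2 * h 1 3 * h 2 1 * h 3 0
    - h 0 3 * h 1 0 * h 2 1 * h 3 2
    + h 0 3 * h 1 0 * h 2 2 * h 3 1
    + h 0 3 * h 1 1 * h 2 0 * h 3 2
    - h 0 3 * h 1 1 * h 2 2 * h 3 0
    - h 0 3 * h 1 2 * h 2 0 * h 3 1
    + h 0 3 * h 1 2 * h 2 1 * h 3 0.
Proof.
rewrite dexp3 !big_ord_recl big_ord0 !detn3 /minorf /=.
ring.
Qed.

Lemma detn5 (R : comRingType) (h : nat -> nat -> R) :
  \det (\matrix_(i < 5, j < 5) h i j) =
    0 + h 0 0 * h 1 1 * h 2 2 * h 3 3 * h 4 4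
    - h 0 0 * h 1 1 * h 2 2 * h 3 4 * h 4 3
    - h 0 0 * h 1 1 * h 2 3 * h 3 2 * h 4 4
    + h 0 0 * h 1 1 * h 2 3 * h 3 4 * h 4 2
    + h 0 0 * h 1 1 * h 2 4 * h 3 2 * h 4 3
    - h 0 0 * h 1 1 * h 2 4 * h 3 3 * h 4 2
    - h 0 0 * h 1 2 * h 2 1 * h 3 3 * h 4 4
    + h 0 0 * h 1 2 * h 2 1 * h 3 4 * h 4 3
    + h 0 0 * h 1 2 * h 2 3 * h 3 1 * h 4 4
    - h 0 0 * h 1 2 * h 2 3 * h 3 4 * h 4 1
    - h 0 0 * h 1 2 * h 2 4 * h 3 1 * h 4 3
    + h 0 0 * h 1 2 * h 2 4 * h 3 3 * h 4 1
    + h 0 0 * h 1 3 * h 2 1 * h 3 2 * h 4 4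
    - h 0 0 * h 1 3 * h 2 1 * h 3 4 * h 4 2
    - h 0 0 * h 1 3 * h 2 2 * h 3 1 * h 4 4
    + h 0 0 * h 1 3 * h 2 2 * h 3 4 * h 4 1
    + h 0 0 * h 1 3 * h 2 4 * h 3 1 * h 4 2
    - h 0 0 * h 1 3 * h 2 4 * h 3 2 * h 4 1
    - h 0 0 * h 1 4 * h 2 1 * h 3 2 * h 4 3
    + h 0 0 * h 1 4 * h 2 1 * h 3 3 * h 4 2
    + h 0 0 * h 1 4 * h 2 2 * h 3 1 * h 4 3
    - h 0 0 * h 1 4 * h 2 2 * h 3 3 * h 4 1
    - h 0 0 * h 1 4 * h 2 3 * h 3 1 * h 4 2
    + h 0 0 * h 1 4 * h 2 3 * h 3 2 * h 4 1
    - h 0 1 * h 1 0 * h 2 2 * h 3 3 * h 4 4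
    + h 0 1 * h 1 0 * h 2 2 * h 3 4 * h 4 3
    + h 0 1 * h 1 0 * h 2 3 * h 3 2 * h 4 4
    - h 0 1 * h 1 0 * h 2 3 * h 3 4 * h 4 2
    - h 0 1 * h 1 0 * h 2 4 * h 3 2 * h 4 3
    + h 0 1 * h 1 0 * h 2 4 * h 3 3 * h 4 2
    + h 0 1 * h 1 2 * h 2 0 * h 3 3 * h 4 4
    - h 0 1 * h 1 2 * h 2 0 * h 3 4 * h 4 3
    - h 0 1 * h 1 2 * h 2 3 * h 3 0 * h 4 4
    + h 0 1 * h 1 2 * h 2 3 * h 3 4 * h 4 0
    + h 0 1 * h 1 2 * h 2 4 * h 3 0 * h 4 3
    - h 0 1 * h 1 2 * h 2 4 * h 3 3 * h 4 0
    - h 0 1 * h 1 3 * h 2 0 * h 3 2 * h 4 4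
    + h 0 1 * h 1 3 * h 2 0 * h 3 4 * h 4 2
    + h 0 1 * h 1 3 * h 2 2 * h 3 0 * h 4 4
    - h 0 1 * h 1 3 * h 2 2 * h 3 4 * h 4 0
    - h 0 1 * h 1 3 * h 2 4 * h 3 0 * h 4 2
    + h 0 1 * h 1 3 * h 2 4 * h 3 2 * h 4 0
    + h 0 1 * h 1 4 * h 2 0 * h 3 2 * h 4 3
    - h 0 1 * h 1 4 * h 2 0 * h 3 3 * h 4 2
    - h 0 1 * h 1 4 * h 2 2 * h 3 0 * h 4 3
    + h 0 1 * h 1 4 * h 2 2 * h 3 3 * h 4 0
    + h 0 1 * h 1 4 * h 2 3 * h 3 0 * h 4 2
    - h 0 1 * h 1 4 * h 2 3 * h 3 2 * h 4 0
    + h 0 2 * h 1 0 * h 2 1 * h 3 3 * h 4 4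
    - h 0 2 * h 1 0 * h 2 1 * h 3 4 * h 4 3
    - h 0 2 * h 1 0 * h 2 3 * h 3 1 * h 4 4
    + h 0 2 * h 1 0 * h 2 3 * h 3 4 * h 4 1
    + h 0 2 * h 1 0 * h 2 4 * h 3 1 * h 4 3
    - h 0 2 * h 1 0 * h 2 4 * h 3 3 * h 4 1
    - h 0 2 * h 1 1 * h 2 0 * h 3 3 * h 4 4
    + h 0 2 * h 1 1 * h 2 0 * h 3 4 * h 4 3
    + h 0 2 * h 1 1 * h 2 3 * h 3 0 * h 4 4
    - h 0 2 * h 1 1 * h 2 3 * h 3 4 * h 4 0
    - h 0 2 * h 1 1 * h 2 4 * h 3 0 * h 4 3
    + h 0 2 * h 1 1 * h 2 4 * h 3 3 * h 4 0
    + h 0 2 * h 1 3 * h 2 0 * h 3 1 * h 4 4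
    - h 0 2 * h 1 3 * h 2 0 * h 3 4 * h 4 1
    - h 0 2 * h 1 3 * h 2 1 * h 3 0 * h 4 4
    + h 0 2 * h 1 3 * h 2 1 * h 3 4 * h 4 0
    + h 0 2 * h 1 3 * h 2 4 * h 3 0 * h 4 1
    - h 0 2 * h 1 3 * h 2 4 * h 3 1 * h 4 0
    - h 0 2 * h 1 4 * h 2 0 * h 3 1 * h 4 3
    + h 0 2 * h 1 4 * h 2 0 * h 3 3 * h 4 1
    + h 0 2 * h 1 4 * h 2 1 * h 3 0 * h 4 3
    - h 0 2 * h 1 4 * h 2 1 * h 3 3 * h 4 0
    - h 0 2 * h 1 4 * h 2 3 * h 3 0 * h 4 1
    + h 0 2 * h 1 4 * h 2 3 * h 3 1 * h 4 0
    - h 0 3 * h 1 0 * h 2 1 * h 3 2 * h 4 4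
    + h 0 3 * h 1 0 * h 2 1 * h 3 4 * h 4 2
    + h 0 3 * h 1 0 * h 2 2 * h 3 1 * h 4 4
    - h 0 3 * h 1 0 * h 2 2 * h 3 4 * h 4 1
    - h 0 3 * h 1 0 * h 2 4 * h 3 1 * h 4 2
    + h 0 3 * h 1 0 * h 2 4 * h 3 2 * h 4 1
    + h 0 3 * h 1 1 * h 2 0 * h 3 2 * h 4 4
    - h 0 3 * h 1 1 * h 2 0 * h 3 4 * h 4 2
    - h 0 3 * h 1 1 * h 2 2 * h 3 0 * h 4 4
    + h 0 3 * h 1 1 * h 2 2 * h 3 4 * h 4 0
    + h 0 3 * h 1 1 * h 2 4 * h 3 0 * h 4 2
    - h 0 3 * h 1 1 * h 2 4 * h 3 2 * h 4 0
    - h 0 3 * h 1 2 * h 2 0 * h 3 1 * h 4 4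
    + h 0 3 * h 1 2 * h 2 0 * h 3 4 * h 4 1
    + h 0 3 * h 1 2 * h 2 1 * h 3 0 * h 4 4
    - h 0 3 * h 1 2 * h 2 1 * h 3 4 * h 4 0
    - h 0 3 * h 1 2 * h 2 4 * h 3 0 * h 4 1
    + h 0 3 * h 1 2 * h 2 4 * h 3 1 * h 4 0
    + h 0 3 * h 1 4 * h 2 0 * h 3 1 * h 4 2
    - h 0 3 * h 1 4 * h 2 0 * h 3 2 * h 4 1
    - h 0 3 * h 1 4 * h 2 1 * h 3 0 * h 4 2
    + h 0 3 * h 1 4 * h 2 1 * h 3 2 * h 4 0
    + h 0 3 * h 1 4 * h 2 2 * h 3 0 * h 4 1
    - h 0 3 * h 1 4 * h 2 2 * h 3 1 * h 4 0
    + h 0 4 * h 1 0 * h 2 1 * h 3 2 * h 4 3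
    - h 0 4 * h 1 0 * h 2 1 * h 3 3 * h 4 2
    - h 0 4 * h 1 0 * h 2 2 * h 3 1 * h 4 3
    + h 0 4 * h 1 0 * h 2 2 * h 3 3 * h 4 1
    + h 0 4 * h 1 0 * h 2 3 * h 3 1 * h 4 2
    - h 0 4 * h 1 0 * h 2 3 * h 3 2 * h 4 1
    - h 0 4 * h 1 1 * h 2 0 * h 3 2 * h 4 3
    + h 0 4 * h 1 1 * h 2 0 * h 3 3 * h 4 2
    + h 0 4 * h 1 1 * h 2 2 * h 3 0 * h 4 3
    - h 0 4 * h 1 1 * h 2 2 * h 3 3 * h 4 0
    - h 0 4 * h 1 1 * h 2 3 * h 3 0 * h 4 2
    + h 0 4 * h 1 1 * h 2 3 * h 3 2 * h 4 0
    + h 0 4 * h 1 2 * h 2 0 * h 3 1 * h 4 3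
    - h 0 4 * h 1 2 * h 2 0 * h 3 3 * h 4 1
    - h 0 4 * h 1 2 * h 2 1 * h 3 0 * h 4 3
    + h 0 4 * h 1 2 * h 2 1 * h 3 3 * h 4 0
    + h 0 4 * h 1 2 * h 2 3 * h 3 0 * h 4 1
    - h 0 4 * h 1 2 * h 2 3 * h 3 1 * h 4 0
    - h 0 4 * h 1 3 * h 2 0 * h 3 1 * h 4 2
    + h 0 4 * h 1 3 * h 2 0 * h 3 2 * h 4 1
    + h 0 4 * h 1 3 * h 2 1 * h 3 0 * h 4 2
    - h 0 4 * h 1 3 * h 2 1 * h 3 2 * h 4 0
    - h 0 4 * h 1 3 * h 2 2 * h 3 0 * h 4 1
    + h 0 4 * h 1 3 * h 2 2 * h 3 1 * h 4 0.
Proof.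
rewrite dexp3 !big_ord_recl big_ord0 !detn4 /minorf /=.
ring.
Qed.

Theorem mainTheorem3 (R : realFieldType)
  (gamma delta x11 x12 x22 y11 y12 y22 p1 p2 q1 q2 : R) :
  0 < gamma -> 0 < delta ->
  (* y = [[y11, y12], [y12, y22]] positive definite *)
  0 < y11 -> 0 < y11 * y22 - y12 ^+ 2 ->
  let D := y11 * y22 - y12 ^+ 2 in
  let I2 := p2 * q1 - p1 * q2 in
  let A := 2 * ((x11 - x22) * y12 - x12 * (y11 - y22)) in
  let B := 4 * x12 ^+ 2 + (x11 - x22) ^+ 2 + y11 ^+ 2 + y22 ^+ 2
           + 2 * y12 ^+ 2 in
  \det (Fmat gamma delta x11 x12 x22 y11 y12 y22 p1 p2 q1 q2) =
  delta * (gamma ^+ 4 - gamma ^+ 3 * (delta * I2) / D * A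
           - gamma ^+ 2 * (delta * I2) ^+ 2 / D * B
           - gamma * (delta * I2) ^+ 3 / D * A + (delta * I2) ^+ 4).
Proof.
move=> _ _ _ hD D I2 A B.
have hD0 : D != 0 by rewrite gt_eqF.
have -> : delta * (gamma ^+ 4 - gamma ^+ 3 * (delta * I2) / D * A
           - gamma ^+ 2 * (delta * I2) ^+ 2 / D * B
           - gamma * (delta * I2) ^+ 3 / D * A + (delta * I2) ^+ 4) =
  delta * ((gamma / D) ^+ 4 * D ^+ 4 - (gamma / D) ^+ 3 * D ^+ 2 * (delta * I2) * A
           - (gamma / D) ^+ 2 * D * (delta * I2) ^+ 2 * B
           - (gamma / D) * (delta * I2) ^+ 3 * A + (delta * I2) ^+ 4).
  by field.
rewrite /Fmat (@detn5 _ (fun a b : nat => if (a <= b)%N then fentry gamma delta x11 x12 x22 y11 y12 y22 p1 p2 q1 q2 a.+1 b.+1 else fentry gamma delta x11 x12 x22 y11 y12 y22 p1 p2 q1 q2 b.+1 a.+1)) /=.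
rewrite /fentry /Ddet -/D.
set g := gamma / D.
rewrite /D /I2 /A /B.
ring.
Qed.
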